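(* Let $0\le\alpha\le\beta\le\pi/2$ and $P_1,P_2>0$, and define $\mathcal R(\theta)$ as in the context. If $|\alpha-\beta|\le\pi/4$, then $\bigcup_{\theta\in[\alpha,\beta]}\mathcal R(\theta)$ is convex; i.e. the first outer bound of the achievable rate region of a two-hop MAC with two relay nodes is convex.
   Context: Let $\mathcal C(x)=\frac12\log_2(1+x)$, $\phi_1(\theta)=P_1\cos^2(\theta-\alpha)$, $\phi_2(\theta)=P_2\cos^2(\theta-\beta)$, $\phi=\phi_1+\phi_2$, and $\mathcal R(\theta)=\{(R_1,R_2)\ge0:R_1\le\mathcal C(\phi_1(\theta)),R_2\le\mathcal C(\phi_2(\theta)),R_1+R_2\le\mathcal C(\phi(\theta))\}$. In a two-user two-hop MAC with two relays, with $\alpha,\beta,\theta$ the polar angles of the normalized source-to-relay channel vectors and of the amplification vector $\mathbf B\mathbf h_1$, and $P_i=\|\mathbf h_{0i}\|^2P_{S_i}$, the first outer bound (destination noise omitted) is the union of the sets $\mathcal R(\theta)$, $\theta\in[\alpha,\beta]$. *)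

(* Defs.v *)
From Stdlib Require Import Reals Lra.
Open Scope R_scope.

Definition Ccap (x : R) : R := / 2 * (ln (1 + x) / ln 2).

Definition phi1 (P1 alpha theta : R) : R := P1 * (cos (theta - alpha))^2.
Definition phi2 (P2 beta theta : R) : R := P2 * (cos (theta - beta))^2.
Definition phi (P1 P2 alpha beta theta : R) : R :=
  phi1 P1 alpha theta + phi2 P2 beta theta.

Definition Rtheta (P1 P2 alpha beta theta : R) (r : R * R) : Prop :=
  0 <= fst r /\ 0 <= snd r /\
  fst r <= Ccap (phi1 P1 alpha theta) /\
  snd r <= Ccap (phi2 P2 beta theta) /\
  fst r + snd r <= Ccap (phi P1 P2 alpha beta theta).

Definition outer_bound (P1 P2 alpha beta : R) (r : R * R) : Prop :=
  exists theta, alpha <= theta <= beta /\ Rtheta P1 P2 alpha beta theta r.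

Definition convex_set (S : R * R -> Prop) : Prop :=
  forall x y : R * R, S x -> S y -> forall t : R, 0 <= t <= 1 ->
    S (t * fst x + (1 - t) * fst y, t * snd x + (1 - t) * snd y).

(* Main.v *)
Require Import Defs.
From Stdlib Require Import Reals Lra.
Open Scope R_scope.

Lemma ln_le_sub1 x : 0 < x -> ln x <= x - 1.
Proof. intro H. pose proof (exp_ineq1_le (ln x)). rewrite exp_ln in H0; lra. Qed.

Lemma ln_concave a b l : 0 < a -> 0 < b -> 0 <= l <= 1 ->
  l * ln a + (1 - l) * ln b <= ln (l * a + (1 - l) * b).
Proof.
  intros Ha Hb Hl. set (m := l * a + (1 - l) * b).
  assert (Hm : 0 < m).
  { unfold m. destruct (Req_dec l 0). subst; lra. nra. }
  pose proof (ln_le_sub1 (a / m)) as H1.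
  pose proof (ln_le_sub1 (b / m)) as H2.
  assert (0 < a / m) by (apply Rdiv_lt_0_compat; lra).
  assert (0 < b / m) by (apply Rdiv_lt_0_compat; lra).
  specialize (H1 H). specialize (H2 H0).
  unfold Rdiv in H1, H2.
  rewrite ln_mult, ln_Rinv in H1 by (try apply Rinv_0_lt_compat; lra).
  rewrite ln_mult, ln_Rinv in H2 by (try apply Rinv_0_lt_compat; lra).
  assert (E : l * (a / m - 1) + (1 - l) * (b / m - 1) = 0).
  { unfold m in *. field. lra. }
  unfold Rdiv in E.
  nra.
Qed.

Lemma ln_le' x y : 0 < x -> x <= y -> ln x <= ln y.
Proof. intros H [H'|H']. left; apply ln_increasing; lra. subst; lra. Qed.

Lemma Ccap_concave u v w l : 0 <= u -> 0 <= v -> 0 <= l <= 1 ->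
  l * u + (1 - l) * v <= w ->
  l * Ccap u + (1 - l) * Ccap v <= Ccap w.
Proof.
  intros Hu Hv Hl Hw. unfold Ccap.
  assert (L2 : 0 < ln 2) by (pose proof ln_lt_2; lra).
  pose proof (ln_concave (1 + u) (1 + v) l ltac:(lra) ltac:(lra) Hl) as H.
  assert (H' : ln (l * (1 + u) + (1 - l) * (1 + v)) <= ln (1 + w)).
  { apply ln_le'. nra. lra. }
  assert (l * ln (1 + u) + (1 - l) * ln (1 + v) <= ln (1 + w)) by lra.
  unfold Rdiv.
  assert (0 < / ln 2) by (apply Rinv_0_lt_compat; lra).
  nra.
Qed.

Lemma cos_tangent x m : - (PI/2) <= x <= PI/2 -> - (PI/2) <= m <= PI/2 ->
  cos x <= cos m - sin m * (x - m).
Proof.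
  intros Hx Hm. destruct (Rtotal_order x m) as [Hlt|[Heq|Hgt]].
  - destruct (MVT_cor2 cos (fun c => - sin c) x m Hlt
      (fun c _ => derivable_pt_lim_cos c)) as [c [Hc Hc2]].
    assert (sin c <= sin m) by (apply sin_incr_1; lra).
    nra.
  - subst. lra.
  - destruct (MVT_cor2 cos (fun c => - sin c) m x Hgt
      (fun c _ => derivable_pt_lim_cos c)) as [c [Hc Hc2]].
    assert (sin m <= sin c) by (apply sin_incr_1; lra).
    nra.
Qed.

Lemma cos2_concave u1 u2 l : - (PI/4) <= u1 <= PI/4 -> - (PI/4) <= u2 <= PI/4 ->
  0 <= l <= 1 ->
  l * (cos u1)^2 + (1 - l) * (cos u2)^2 <= (cos (l * u1 + (1 - l) * u2))^2.
Proof.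
  intros H1 H2 Hl. set (m := l * u1 + (1 - l) * u2).
  assert (Hm : - (PI/4) <= m <= PI/4) by (unfold m; split; nra).
  assert (C : forall y, cos y ^ 2 = (1 + cos (2 * y)) / 2).
  { intro y. rewrite cos_2a_cos. field. }
  rewrite !C.
  pose proof (cos_tangent (2 * u1) (2 * m) ltac:(lra) ltac:(lra)).
  pose proof (cos_tangent (2 * u2) (2 * m) ltac:(lra) ltac:(lra)).
  assert (E : l * (2 * u1 - 2 * m) + (1 - l) * (2 * u2 - 2 * m) = 0)
    by (unfold m; ring).
  pose proof (Rmult_le_compat_l l _ _ (proj1 Hl) H).
  pose proof (Rmult_le_compat_l (1 - l) _ _ ltac:(lra) H0).
  assert (E2 : l * (cos (2 * m) - sin (2 * m) * (2 * u1 - 2 * m)) +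
    (1 - l) * (cos (2 * m) - sin (2 * m) * (2 * u2 - 2 * m)) = cos (2 * m))
    by (rewrite <- (Rmult_1_l (cos (2*m))) at 3;
        replace (1 * cos (2 * m)) with ((l + (1 - l)) * cos (2 * m)) by ring;
        transitivity ((l + (1-l)) * cos (2*m) - sin (2*m) * (l * (2 * u1 - 2 * m) + (1 - l) * (2 * u2 - 2 * m))); [ring | rewrite E; ring]).
  lra.
Qed.

Theorem lemma4 (alpha beta P1 P2 : R) :
  0 <= alpha -> alpha <= beta -> beta <= PI / 2 ->
  0 < P1 -> 0 < P2 ->
  Rabs (alpha - beta) <= PI / 4 ->
  convex_set (outer_bound P1 P2 alpha beta).
Proof.
  intros H0 Hab Hb HP1 HP2 Habs.
  rewrite Rabs_left1 in Habs by lra.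
  intros [x1 y1] [x2 y2] [t1 [Ht1 [Hx1 [Hy1 [Ha1 [Hb1 Hs1]]]]]]
                          [t2 [Ht2 [Hx2 [Hy2 [Ha2 [Hb2 Hs2]]]]]] l Hl.
  simpl in *.
  exists (l * t1 + (1 - l) * t2). split. { split; nra. }
  unfold Rtheta, phi, phi1, phi2 in *; cbn [fst snd].
  assert (E1 : l * t1 + (1 - l) * t2 - alpha = l * (t1 - alpha) + (1 - l) * (t2 - alpha)) by ring.
  assert (E2 : l * t1 + (1 - l) * t2 - beta = l * (t1 - beta) + (1 - l) * (t2 - beta)) by ring.
  rewrite E1, E2.
  pose proof (cos2_concave (t1 - alpha) (t2 - alpha) l ltac:(lra) ltac:(lra) Hl) as Ca.
  pose proof (cos2_concave (t1 - beta) (t2 - beta) l ltac:(lra) ltac:(lra) Hl) as Cb.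
  assert (Pa1 : 0 <= P1 * cos (t1 - alpha) ^ 2) by (apply Rmult_le_pos; [lra| apply pow2_ge_0]).
  assert (Pa2 : 0 <= P1 * cos (t2 - alpha) ^ 2) by (apply Rmult_le_pos; [lra| apply pow2_ge_0]).
  assert (Pb1 : 0 <= P2 * cos (t1 - beta) ^ 2) by (apply Rmult_le_pos; [lra| apply pow2_ge_0]).
  assert (Pb2 : 0 <= P2 * cos (t2 - beta) ^ 2) by (apply Rmult_le_pos; [lra| apply pow2_ge_0]).
  pose proof (Rmult_le_compat_l P1 _ _ ltac:(lra) Ca).
  pose proof (Rmult_le_compat_l P2 _ _ ltac:(lra) Cb).
  pose proof (Ccap_concave _ _ (P1 * cos (l * (t1 - alpha) + (1 - l) * (t2 - alpha)) ^ 2) l Pa1 Pa2 Hl ltac:(nra)) as K1.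
  pose proof (Ccap_concave _ _ (P2 * cos (l * (t1 - beta) + (1 - l) * (t2 - beta)) ^ 2) l Pb1 Pb2 Hl ltac:(nra)) as K2.
  pose proof (Ccap_concave (P1 * cos (t1 - alpha) ^ 2 + P2 * cos (t1 - beta) ^ 2)
     (P1 * cos (t2 - alpha) ^ 2 + P2 * cos (t2 - beta) ^ 2)
     (P1 * cos (l * (t1 - alpha) + (1 - l) * (t2 - alpha)) ^ 2 +
     P2 * cos (l * (t1 - beta) + (1 - l) * (t2 - beta)) ^ 2) l ltac:(lra) ltac:(lra) Hl ltac:(lra)) as K3.
  assert (Hl1 : 0 <= 1 - l) by lra.
  pose proof (Rmult_le_compat_l l _ _ (proj1 Hl) Ha1).
  pose proof (Rmult_le_compat_l l _ _ (proj1 Hl) Hb1).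
  pose proof (Rmult_le_compat_l l _ _ (proj1 Hl) Hs1).
  pose proof (Rmult_le_compat_l (1 - l) _ _ Hl1 Ha2).
  pose proof (Rmult_le_compat_l (1 - l) _ _ Hl1 Hb2).
  pose proof (Rmult_le_compat_l (1 - l) _ _ Hl1 Hs2).
  pose proof (Rmult_le_pos l _ (proj1 Hl) Hx1).
  pose proof (Rmult_le_pos l _ (proj1 Hl) Hy1).
  pose proof (Rmult_le_pos (1 - l) _ Hl1 Hx2).
  pose proof (Rmult_le_pos (1 - l) _ Hl1 Hy2).
  repeat split; lra.
Qed.
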